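(* Let $\phi,\psi$ be seeds with $parent(\psi)=\phi$ and let $i\in\{1,\dots,n-3\}$. Then $\psi=son(\phi,i)$ if and only if $ord(\psi)=i$.
   Context: Fix an integer $n\ge 5$. An $n$-permutation is a sequence $(a_1,\dots,a_n)$ of the distinct elements of $\{1,\dots,n\}$. For $\pi=(a_1,\dots,a_n)$ put $\sigma(\pi)=(a_2,\dots,a_n,a_1)$; $\sigma^i$ is $\sigma$ applied $i$ times. On $\{1,\dots,n-1\}$ let $a\oplus 1=a+1$ for $a<n-1$ and $(n-1)\oplus 1=1$. A seed is an $(n-1)$-tuple $\psi=(a_1,\dots,a_{n-1})$ of distinct elements of $\{1,\dots,n\}$ with $a_1=n$ and $a_2\oplus1\notin\{a_1,\dots,a_{n-1}\}$; its missing element is $mis(\psi)=a_2\oplus 1$. The package $perms(\psi)$ is the set of all $n$-permutations obtained from $\psi$ by inserting $mis(\psi)$ at any position and then applying any cyclic rotation. Seeds $\phi,\psi$ are neighbors if $perms(\phi)\cap perms(\psi)\neq\emptyset$. For a seed $\psi=(a_1,\dots,a_{n-1})$ with $x=mis(\psi)$: $height(\psi)$ is the largest $k\in\{1,\dots,n-2\}$ such that $a_i=a_{i+1}\oplus 1$ for all $2\le i\le k$; $\widetilde\psi=(a_1,x,a_2,\dots,a_{n-1})$; for $1\le i\le n-1$, $\psi^{(i)}=(x,c_1,\dots,c_{n-1})$ where $(c_1,\dots,c_{n-1})$ is $\psi$ cyclically rotated to the right by $i-1$ positions. For distinct neighboring seeds $\beta,\psi$ we write $parent(\beta)=\psi$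 if $height(\psi)>1$ and $mis(\psi)=mis(\beta)\oplus 1$; if moreover $\sigma^i(\psi^{(i)})=\widetilde\beta$ we write $son(\psi,i)=\beta$. For a seed $\psi$, $ord(\psi)$ is the position of the entry $mis(\psi)\oplus 1$ in $\psi$ counted from the right end (the last entry of $\psi$ has position $1$). *)

(* Defs.v *)
From mathcomp Require Import all_boot.
Set Implicit Arguments. Unset Strict Implicit. Unset Printing Implicit Defensive.

Definition oplus (n a : nat) : nat := if a < n.-1 then a.+1 else 1.

Definition sigma (s : seq nat) : seq nat := rot 1 s.

(* a seed: (n-1)-tuple of distinct elements of {1..n}, a_1 = n,
   a_2 (+) 1 not among the entries.  Entry a_k is nth 0 s k.-1. *)
Definition is_seed (n : nat) (s : seq nat) : bool :=
  [&& size s == n.-1, uniq s, all (fun a => (1 <= a) && (a <= n)) s,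
      nth 0 s 0 == n & oplus n (nth 0 s 1) \notin s].

Definition mis (n : nat) (s : seq nat) : nat := oplus n (nth 0 s 1).

Definition in_perms (n : nat) (s p : seq nat) : Prop :=
  exists j k, j <= size s /\ p = iter k sigma (take j s ++ mis n s :: drop j s).

Definition neighbors (n : nat) (phi psi : seq nat) : Prop :=
  exists p, in_perms n phi p /\ in_perms n psi p.

Definition height_ok (n : nat) (s : seq nat) (k : nat) : bool :=
  all (fun i => nth 0 s i.-1 == oplus n (nth 0 s i)) (iota 2 k.-1).

Definition height (n : nat) (s : seq nat) : nat :=
  \max_(1 <= k < n.-1 | height_ok n s k) k.

Definition tilde (n : nat) (s : seq nat) : seq nat :=
  nth 0 s 0 :: mis n s :: behead s.

Definition psi_i (n : nat) (s : seq nat) (i : nat) : seq nat :=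
  mis n s :: rotr i.-1 s.

Definition parent (n : nat) (beta psi : seq nat) : Prop :=
  [/\ beta <> psi, neighbors n beta psi, 1 < height n psi
    & mis n psi = oplus n (mis n beta)].

Definition son (n : nat) (psi : seq nat) (i : nat) (beta : seq nat) : Prop :=
  parent n beta psi /\ iter i sigma (psi_i n psi i) = tilde n beta.

(* position of mis(psi) (+) 1 in psi, counted from the right (last = 1) *)
Definition ord (n : nat) (s : seq nat) : nat :=
  size s - index (oplus n (mis n s)) s.

(* Main.v *)
Require Import Defs.
From mathcomp Require Import all_boot zify.

Definition ins (s : seq nat) j e := take j s ++ e :: drop j s.
Definition canon (n : nat) (L : seq nat) := rot (index n L) L.

Lemma canon_rot1 (n : nat) (L : seq nat) : n \in L -> uniq L -> canon n (rot 1 L) = canon n L.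
Proof.
case: L => [//|a l] Hn Hu; rewrite /canon rot1_cons.
case: (eqVneq a n) => [Ha|ha]; first subst a.
  move: Hu => /= /andP[Hnl _].
  rewrite eqxx /= -cats1 index_cat (negbTE Hnl) /= eqxx addn0.
  by rewrite rot_size_cat rot0.
have Hnl : n \in l by move: Hn; rewrite inE eq_sym (negbTE ha).
rewrite /= (negbTE ha) -cats1 index_cat Hnl.
have Hi : index n l <= size l by rewrite index_size.
rewrite /rot cats1 drop_rcons // -[rcons l a]cats1 takel_cat //=.
by rewrite cat_rcons.
Qed.

Lemma canon_iter (n k : nat) (L : seq nat) : n \in L -> uniq L -> canon n (iter k sigma L) = canon n L.
Proof.
move=> Hn Hu.
have H : forall k, [&& n \in iter k sigma L, uniq (iter k sigma L) & canon n (iter k sigma L) == canon n L].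
  elim=> [|k' /and3P[H1 H2 /eqP H3]] /=; first by rewrite Hn Hu eqxx.
  by rewrite /sigma mem_rot H1 rot_uniq H2 canon_rot1 // H3 eqxx.
by case/and3P: (H k) => _ _ /eqP.
Qed.

Lemma canon_ins (n : nat) (s' : seq nat) (j e : nat) : e != n -> n \notin s' -> j <= (size s').+1 ->
  exists2 j', j' <= size s' & canon n (ins (n :: s') j e) = n :: ins s' j' e.
Proof.
move=> He Hn; case: j => [|j] Hj.
  exists (size s') => //.
  rewrite /ins /canon take0 drop0 /= (negbTE He) eqxx /=.
  rewrite take_size drop_size.
  by rewrite (_ : 1 = size [:: e]) // rot_size_cat.
exists j => //.
by rewrite /ins /canon /= eqxx /= rot0.
Qed.

Lemma rem_ins (s : seq nat) (j e : nat) : e \notin s -> rem e (ins s j e) = s.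
Proof.
elim: s j => [|a s IH] [|j] He; rewrite /ins /= ?eqxx //.
have Hae : a != e by move: He; rewrite inE negb_or eq_sym => /andP[].
rewrite (negbTE Hae) -/(ins s j e) IH //; by move: He; rewrite inE negb_or => /andP[].
Qed.

Lemma index_ins (s : seq nat) (j e : nat) : e \notin s -> j <= size s -> index e (ins s j e) = j.
Proof.
move=> He Hj; rewrite /ins index_cat.
have -> : (e \in take j s) = false by apply/negP => /mem_take; apply/negP.
by rewrite size_take /= eqxx addn0; case: ltngtP Hj => //; lia.
Qed.

Lemma size_ins (s : seq nat) (j e : nat) : size (ins s j e) = (size s).+1.
Proof. by rewrite /ins size_cat /= addnS -size_cat cat_take_drop. Qed.

Lemma iter_sigma k (s : seq nat) : k <= size s -> iter k sigma s = rot k s.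
Proof.
elim: k => [|k IH] Hk /=; first by rewrite rot0.
rewrite IH ?(ltnW Hk) // /sigma -rotD //; lia.
Qed.

Lemma oplus_range n a : 2 <= n -> 1 <= oplus n a <= n.-1.
Proof. rewrite /oplus; case: ifP; lia. Qed.

Lemma oplus_inj n a b : 2 <= n -> 1 <= a <= n.-1 -> 1 <= b <= n.-1 ->
  oplus n a = oplus n b -> a = b.
Proof. rewrite /oplus; case: ifP; case: ifP; lia. Qed.

Lemma perm_ins (s : seq nat) j e : perm_eq (ins s j e) (e :: s).
Proof. by rewrite /ins -cat1s perm_catCA cat_take_drop perm_refl. Qed.

Lemma oplus2 n a : 5 <= n -> 1 <= a <= n.-1 -> oplus n (oplus n a) != a.
Proof. move=> Hn Ha; apply/eqP; rewrite /oplus; case: ifP; case: ifP; lia. Qed.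

Lemma comp (s : seq nat) e i : 1 <= i <= size s ->
  iter i sigma (e :: rotr i.-1 s) = ins s (size s - i.-1) e.
Proof.
move=> Hi; rewrite /ins.
set u := take _ s; set v := drop _ s.
have Hv : size v = i.-1 by rewrite /v size_drop; lia.
have Hs : s = u ++ v by rewrite cat_take_drop.
rewrite {1}Hs -Hv rotr_size_cat iter_sigma; last by rewrite /= size_cat Hv; lia.
have -> : i = size (e :: v) by rewrite /= Hv; lia.
by rewrite -cat_cons rot_size_cat.
Qed.

Lemma seed_cases n s : 5 <= n -> is_seed n s ->
  exists a t, [/\ s = n :: a :: t, size t = n - 3, 1 <= a <= n.-1,
     uniq (n :: a :: t) & oplus n a \notin s].
Proof.
move=> Hn /and5P[/eqP Hs Hu Ha /eqP H0 Hx].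
case: s Hs Hu Ha H0 Hx => [|p0 [|a t]] /= Hs; try lia.
move=> Hu' /and3P[Hp0 /andP[Ha1 Ha2] _] Hp0n Hx; subst p0.
exists a, t; split => //; try lia.
move: Hu' => /andP[Hp _].
move: Hp; rewrite inE negb_or => /andP[Han _].
move: Han Ha1 Ha2; rewrite eq_sym; move=> /eqP; lia.
Qed.

Theorem mainTheorem4 (n : nat) (phi psi : seq nat) (i : nat) :
  5 <= n -> is_seed n phi -> is_seed n psi ->
  parent n psi phi -> 1 <= i <= n - 3 ->
  (son n phi i psi <-> ord n psi = i).
Proof.
move=> Hn Hphi Hpsi Hpar Hi.
have [a2 [t [Ephi St Ra2 /andP[Nphi Uphi] Xphi]]] := seed_cases _ _ Hn Hphi.
have [b1 [s [Epsi Ss Rb1 /andP[Npsi Upsi] Xpsi]]] := seed_cases _ _ Hn Hpsi.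
case: (Hpar) => _ [p [[j2 [k2 [Hj2 Hp2]]] [j1 [k1 [Hj1 Hp1]]]]] _ Hmis.
have Hn2 : 2 <= n by lia.
set x := oplus n a2.
set y := oplus n b1.
have Hmphi : mis n phi = x by rewrite /mis Ephi.
have Hmpsi : mis n psi = y by rewrite /mis Epsi.
have Ry := oplus_range _ b1 Hn2.
have Rx := oplus_range _ a2 Hn2.
have Ha2y : a2 = y.
  apply: (oplus_inj _ _ _ Hn2) => //; by move: Hmis; rewrite Hmphi Hmpsi.
have Hxn : x != n by apply/eqP; lia.
have Hyn : y != n by apply/eqP; lia.
have C1 : canon n p = canon n (ins phi j1 x).
  rewrite Hp1 Hmphi; apply: canon_iter.
    by rewrite (perm_mem (perm_ins _ _ _)) Ephi !inE eqxx orbT.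
  by rewrite (perm_uniq (perm_ins _ _ _)) /= Xphi Ephi /= Nphi Uphi.
have C2 : canon n p = canon n (ins psi j2 y).
  rewrite Hp2 Hmpsi; apply: canon_iter.
    by rewrite (perm_mem (perm_ins _ _ _)) Epsi !inE eqxx orbT.
  by rewrite (perm_uniq (perm_ins _ _ _)) /= Xpsi Epsi /= Npsi Upsi.
have Hj1e : j1 <= (size (a2 :: t)).+1 by move: Hj1; rewrite Ephi.
have Hj2e : j2 <= (size (b1 :: s)).+1 by move: Hj2; rewrite Epsi.
have [j1' Hj1' D1] := canon_ins _ _ j1 _ Hxn Nphi Hj1e.
have [j2' Hj2' D2] := canon_ins _ _ j2 _ Hyn Npsi Hj2e.
rewrite Ephi in C1; rewrite Epsi in C2.
have E : ins (a2 :: t) j1' x = ins (b1 :: s) j2' y.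
  by move: C1; rewrite C2 D1 D2 => -[].
have Hyb : y \notin b1 :: s by move: Xpsi; rewrite Epsi inE negb_or => /andP[].
have Hxphi : x \notin a2 :: t by move: Xphi; rewrite Ephi inE negb_or => /andP[].
have Hxt : x \notin t by move: Hxphi; rewrite inE negb_or => /andP[].
have Hxa2 : x != a2 by move: Hxphi; rewrite inE negb_or => /andP[].
have := congr1 (rem y) E; rewrite rem_ins // -Ha2y.
case: j1' Hj1' {E D1} => [|m] Hm.
  rewrite /ins /= (negbTE Hxa2) eqxx => -[Hb1 _].
  have H := oplus2 _ _ Hn Ra2; have Hc : oplus n x = a2 by rewrite Hb1 Ha2y. by rewrite /x in Hc; rewrite Hc eqxx in H.
rewrite /ins /= eqxx -/(ins t m x) => Es.
have Hmt : m <= size t by move: Hm.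
have Hord : ord n psi = n - 2 - m.
  rewrite /ord Hmpsi -Ha2y Epsi -Es /=; change (oplus n a2) with x.
  rewrite size_ins eq_sym (negbTE Hxn) index_ins // St; clear -Hn; lia.
rewrite Hord.
have Hcomp : iter i sigma (psi_i n phi i) = n :: a2 :: ins t (n - i - 2) x.
  rewrite /psi_i Hmphi comp; last by rewrite Ephi /= St; clear -Hi Hn; lia.
  rewrite Ephi /= St.
  have -> : ((n - 3).+2 - i.-1) = (n - i - 2).+2 by clear -Hi Hn; lia.
  by [].
have Ht : tilde n psi = n :: a2 :: ins t m x by rewrite /tilde Hmpsi Epsi /= -Ha2y -Es.
have Hk : n - i - 2 <= size t by rewrite St; clear -Hi Hn; lia.
rewrite /son Hcomp Ht; split.
  move=> [_ [H]]; have := congr1 (index x) H.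
  rewrite !index_ins // => {}H; clear -H Hi Hn St Hmt; lia.
move=> H; split => //.
by have -> : n - i - 2 = m by clear -H Hi Hn St Hmt; lia.
Qed.
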